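(* Let $E$ and $F$ be Banach lattices. If each weak Dunford–Pettis operator from $E$ into $F$ is uaw-Dunford–Pettis, then the norm of $E'$ is order continuous or the norm of $F$ is order continuous.
   Context: All operators are continuous linear operators. A net $(x_\alpha)$ in a Banach lattice $E$ is uaw-convergent to $x$ (written $x_\alpha\xrightarrow{uaw}x$) if $|x_\alpha-x|\wedge u\to 0$ weakly for every $u\in E_+$. An operator $T$ from a Banach lattice $E$ into a Banach space $X$ is uaw-Dunford–Pettis if for every norm bounded sequence $(x_n)$ in $E$ with $x_n\xrightarrow{uaw}0$ one has $\|Tx_n\|\to 0$. An operator $T:X\to Y$ between Banach spaces is weak Dunford–Pettis if $f_n(Tx_n)\to 0$ for every weakly null sequence $(x_n)$ in $X$ and every weakly null sequence $(f_n)$ in $Y'$. *)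

(* Defs.v *)
From HB Require Import structures.
From mathcomp Require Import all_boot all_order all_algebra.
From mathcomp Require Import all_classical all_reals all_analysis.
Set Implicit Arguments. Unset Strict Implicit. Unset Printing Implicit Defensive.
Import Order.TTheory GRing.Theory Num.Theory.
Import numFieldNormedType.Exports.
Local Open Scope classical_set_scope.
Local Open Scope ring_scope.

Record BLattice (R : realType) (E : completeNormedModType R) := {
  ble : E -> E -> Prop;
  bjoin : E -> E -> E;
  ble_refl : forall x, ble x x;
  ble_anti : forall x y, ble x y -> ble y x -> x = y;
  ble_trans : forall x y z, ble x y -> ble y z -> ble x z;
  ble_add : forall x y z, ble x y -> ble (x + z) (y + z);
  ble_scale : forall (a : R) x y, 0 <= a -> ble x y -> ble (a *: x) (a *: y);
  bjoin_ubl : forall x y, ble x (bjoin x y);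
  bjoin_ubr : forall x y, ble y (bjoin x y);
  bjoin_lub : forall x y z, ble x z -> ble y z -> ble (bjoin x y) z;
  bnorm_mono : forall x y, ble (bjoin x (- x)) (bjoin y (- y)) -> `|x| <= `|y|
}.
Arguments BLattice R E : clear implicits.

Section BL.
Variables (R : realType) (E : completeNormedModType R) (L : BLattice R E).
Definition babs (x : E) : E := bjoin L x (- x).
Definition bmeet (x y : E) : E := - bjoin L (- x) (- y).
End BL.

Definition is_dual (R : realType) (X : normedModType R) (f : X -> R) : Prop :=
  (forall (a : R) (x y : X), f (a *: x + y) = a * f x + f y) /\ continuous f.

Definition dnorm (R : realType) (X : normedModType R) (f : X -> R) : R :=
  sup [set `|f x| | x in [set x : X | `|x| <= 1]].

Definition is_bidual (R : realType) (X : normedModType R)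
    (phi : (X -> R) -> R) : Prop :=
  (forall (a : R) (f g : X -> R), is_dual f -> is_dual g ->
      phi (fun x => a * f x + g x) = a * phi f + phi g) /\
  exists C : R, forall f : X -> R, is_dual f -> `|phi f| <= C * dnorm f.

Definition weakly_null (R : realType) (X : normedModType R) (x : nat -> X) :=
  forall f : X -> R, is_dual f -> (fun n => f (x n)) @ \oo --> (0 : R).

Definition dual_weakly_null (R : realType) (X : normedModType R)
    (f : nat -> X -> R) :=
  (forall n, is_dual (f n)) /\
  forall phi : (X -> R) -> R, is_bidual phi ->
    (fun n => phi (f n)) @ \oo --> (0 : R).

Definition is_operator (R : realType) (X Y : normedModType R) (T : X -> Y) :=
  (forall (a : R) (x y : X), T (a *: x + y) = a *: T x + T y) /\ continuous T.

Definition weak_DP (R : realType) (X Y : normedModType R) (T : X -> Y) :=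
  forall (x : nat -> X) (f : nat -> Y -> R),
    weakly_null x -> dual_weakly_null f ->
    (fun n => f n (T (x n))) @ \oo --> (0 : R).

Definition uaw_null (R : realType) (E : completeNormedModType R)
    (L : BLattice R E) (x : nat -> E) :=
  forall u : E, ble L 0 u -> weakly_null (fun n => bmeet L (babs L (x n)) u).

Definition uaw_DP (R : realType) (E : completeNormedModType R)
    (L : BLattice R E) (Y : normedModType R) (T : E -> Y) :=
  forall x : nat -> E, (exists M : R, forall n, `|x n| <= M) ->
    uaw_null L x -> (fun n => `|T (x n)|) @ \oo --> (0 : R).

Definition directed (I : Type) (leI : I -> I -> Prop) : Prop :=
  (exists i : I, True) /\
  (forall i, leI i i) /\
  (forall i j k, leI i j -> leI j k -> leI i k) /\
  (forall i j, exists k, leI i k /\ leI j k).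

Definition order_continuous_norm (R : realType) (E : completeNormedModType R)
    (L : BLattice R E) : Prop :=
  forall (I : Type) (leI : I -> I -> Prop) (x : I -> E),
    directed leI ->
    (forall i j, leI i j -> ble L (x j) (x i)) ->
    (forall i, ble L 0 (x i)) ->
    (forall z, (forall i, ble L z (x i)) -> ble L z 0) ->
    forall eps : R, 0 < eps -> exists i0, forall i, leI i0 i -> `|x i| <= eps.

Definition dle (R : realType) (E : completeNormedModType R) (L : BLattice R E)
    (f g : E -> R) : Prop :=
  forall x, ble L 0 x -> f x <= g x.

Definition dual_order_continuous_norm (R : realType)
    (E : completeNormedModType R) (L : BLattice R E) : Prop :=
  forall (I : Type) (leI : I -> I -> Prop) (f : I -> E -> R),
    directed leI ->
    (forall i, is_dual (f i)) ->
    (forall i j, leI i j -> dle L (f j) (f i)) ->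
    (forall i, dle L (fun _ => 0) (f i)) ->
    (forall h, is_dual h -> (forall i, dle L h (f i)) -> dle L h (fun _ => 0)) ->
    forall eps : R, 0 < eps -> exists i0, forall i, leI i0 i -> dnorm (f i) <= eps.

(* Main.v *)
Require Import Defs.
From HB Require Import structures.
From mathcomp Require Import all_boot all_order all_algebra.
From mathcomp Require Import all_classical all_reals all_analysis.
From mathcomp Require Import ring lra.
Import Order.TTheory GRing.Theory Num.Theory.
Import numFieldNormedType.Exports.
Local Open Scope classical_set_scope.
Local Open Scope ring_scope.
Set Implicit Arguments. Unset Strict Implicit.

Section Lat.
Variables (R : realType) (E : completeNormedModType R) (L : BLattice R E).
Local Notation le := (ble L).
Local Notation jn := (bjoin L).
Local Notation mt := (bmeet L).
Local Notation ab := (babs L).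
Definition bpos (x : E) := bjoin L x 0.
Definition bneg (x : E) := bjoin L (- x) 0.
Local Notation pos := bpos.
Local Notation neg := bneg.

Lemma le_tr x y z : le x y -> le y z -> le x z. Proof. exact: ble_trans. Qed.
Lemma le_rf x : le x x. Proof. exact: ble_refl. Qed.
Lemma le_an x y : le x y -> le y x -> x = y. Proof. exact: ble_anti. Qed.

Lemma le_addl x y z : le x y -> le (z + x) (z + y).
Proof. by move=> h; rewrite ![z + _]addrC; apply: ble_add. Qed.

Lemma le_subr x y z : le x y -> le (x - z) (y - z).
Proof. exact: ble_add. Qed.

Lemma le_sub0 x y : le x y -> le 0 (y - x).
Proof. by move=> h; rewrite -(subrr x); apply: le_subr. Qed.

Lemma le_0sub x y : le 0 (y - x) -> le x y.
Proof. by move=> /(ble_add x); rewrite add0r subrK. Qed.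

Lemma le_opp x y : le x y -> le (- y) (- x).
Proof.
move=> /(ble_add (- x - y)).
by rewrite addrA subrr add0r addrCA subrr addr0.
Qed.

Lemma le_oppK x y : le (- y) (- x) -> le x y.
Proof. by move=> /le_opp; rewrite !opprK. Qed.

Lemma le_D x y z w : le x y -> le z w -> le (x + z) (y + w).
Proof.
move=> h1 h2; apply: le_tr (ble_add z h1) _; exact: le_addl.
Qed.

Lemma le_sc a x y : 0 <= a -> le x y -> le (a *: x) (a *: y).
Proof. exact: ble_scale. Qed.

Lemma le_sc0 a x : 0 <= a -> le 0 x -> le 0 (a *: x).
Proof. by move=> a0 /(le_sc a0); rewrite scaler0. Qed.

Lemma le_D0 x y : le 0 x -> le 0 y -> le 0 (x + y).
Proof. by move=> h1 h2; have := le_D h1 h2; rewrite addr0. Qed.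

Lemma jn_l x y : le x (jn x y). Proof. exact: bjoin_ubl. Qed.
Lemma jn_r x y : le y (jn x y). Proof. exact: bjoin_ubr. Qed.
Lemma jn_lub x y z : le x z -> le y z -> le (jn x y) z. Proof. exact: bjoin_lub. Qed.

Lemma jnC x y : jn x y = jn y x.
Proof. by apply: le_an; apply: jn_lub; [apply: jn_r|apply: jn_l|apply: jn_r|apply: jn_l]. Qed.

Lemma jn_id x y : le y x -> jn x y = x.
Proof. by move=> h; apply: le_an; [apply: jn_lub => //; apply: le_rf|apply: jn_l]. Qed.

Lemma jnD x y z : jn (x + z) (y + z) = jn x y + z.
Proof.
apply: le_an.
  by apply: jn_lub; apply: ble_add; [apply: jn_l|apply: jn_r].
have h : le (jn x y) (jn (x + z) (y + z) - z).
  apply: jn_lub.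
    by rewrite -{1}(addrK z x); apply: le_subr; apply: jn_l.
  by rewrite -{1}(addrK z y); apply: le_subr; apply: jn_r.
by move: (ble_add z h); rewrite subrK.
Qed.

Lemma mt_def x y : mt x y = - jn (- x) (- y). Proof. by []. Qed.

Lemma mt_l x y : le (mt x y) x.
Proof. by rewrite mt_def; apply: le_oppK; rewrite opprK; apply: jn_l. Qed.
Lemma mt_r x y : le (mt x y) y.
Proof. by rewrite mt_def; apply: le_oppK; rewrite opprK; apply: jn_r. Qed.
Lemma mt_glb x y z : le z x -> le z y -> le z (mt x y).
Proof.
move=> h1 h2; rewrite mt_def; apply: le_oppK; rewrite opprK.
by apply: jn_lub; apply: le_opp.
Qed.

Lemma mtC x y : mt x y = mt y x.
Proof. by rewrite !mt_def jnC. Qed.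

Lemma mtD x y z : mt (x + z) (y + z) = mt x y + z.
Proof. by rewrite !mt_def !opprD jnD opprD opprK. Qed.

Lemma mt_mono x y x' y' : le x x' -> le y y' -> le (mt x y) (mt x' y').
Proof.
move=> h1 h2; apply: mt_glb; [apply: le_tr (mt_l _ _) h1|apply: le_tr (mt_r _ _) h2].
Qed.

Lemma jn_mono x y x' y' : le x x' -> le y y' -> le (jn x y) (jn x' y').
Proof.
move=> h1 h2; apply: jn_lub; [apply: le_tr h1 (jn_l _ _)|apply: le_tr h2 (jn_r _ _)].
Qed.

Lemma add_jn_mt x y : x + y = jn x y + mt x y.
Proof.
rewrite mt_def.
have -> : jn x y = jn (- y) (- x) + (x + y).
  by rewrite -jnD addrCA addNr addr0 addKr.
by rewrite (jnC (- y)) [jn _ _ + _]addrC addrK.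
Qed.

Lemma jnZ a x y : 0 < a -> jn (a *: x) (a *: y) = a *: jn x y.
Proof.
move=> a0; apply: le_an.
  by apply: jn_lub; apply: le_sc; rewrite ?ltW //; [apply: jn_l|apply: jn_r].
have ai : 0 <= a^-1 by rewrite invr_ge0 ltW.
have h : le (jn x y) (a^-1 *: jn (a *: x) (a *: y)).
  apply: jn_lub.
    by rewrite -{1}(scalerK (lt0r_neq0 a0) x); apply: le_sc => //; apply: jn_l.
  by rewrite -{1}(scalerK (lt0r_neq0 a0) y); apply: le_sc => //; apply: jn_r.
by move: (le_sc (ltW a0) h); rewrite scalerA divff ?scale1r // lt0r_neq0.
Qed.

Lemma mtZ a x y : 0 < a -> mt (a *: x) (a *: y) = a *: mt x y.
Proof. by move=> a0; rewrite !mt_def -!scalerN jnZ // scalerN. Qed.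

Lemma ab_ge x : le x (ab x). Proof. exact: jn_l. Qed.
Lemma ab_geN x : le (- x) (ab x). Proof. exact: jn_r. Qed.

Lemma half_pos (v : E) : le 0 (v + v) -> le 0 v.
Proof.
move=> h; have h2 : (0 : R) <= 2^-1 by rewrite invr_ge0.
move: (le_sc0 h2 h); rewrite -mulr2n -(scaler_nat 2 v) scalerA mulVf ?scale1r //; by rewrite pnatr_eq0.
Qed.

Lemma ab_ge0 x : le 0 (ab x).
Proof.
apply: half_pos; have := le_D (ab_ge x) (ab_geN x); by rewrite subrr.
Qed.

Lemma ab_id x : le 0 x -> ab x = x.
Proof.
move=> h; apply: jn_id; apply: le_tr (le_opp h) _; rewrite oppr0; exact.
Qed.

Lemma ab_ab x : ab (ab x) = ab x. Proof. exact/ab_id/ab_ge0. Qed.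

Lemma bnm x y : le (ab x) (ab y) -> `|x| <= `|y|.
Proof. exact: bnorm_mono. Qed.

Lemma norm_ab x : `|ab x| = `|x|.
Proof.
apply/eqP; rewrite eq_le; apply/andP; split; apply: bnm;
  rewrite ?ab_ab; exact: le_rf.
Qed.

Lemma norm_mono x y : le 0 x -> le x y -> `|x| <= `|y|.
Proof.
move=> h0 h; apply: bnm; rewrite (ab_id h0) ab_id //.
exact: le_tr h0 h.
Qed.

Lemma norm_le_ab x y : le (ab x) y -> `|x| <= `|y|.
Proof. move=> h; rewrite -norm_ab; apply: norm_mono => //; exact: ab_ge0. Qed.

Lemma pos_ge0 x : le 0 (pos x). Proof. exact: jn_r. Qed.
Lemma pos_ge x : le x (pos x). Proof. exact: jn_l. Qed.
Lemma neg_ge0 x : le 0 (neg x). Proof. exact: jn_r. Qed.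
Lemma pos_id x : le 0 x -> pos x = x. Proof. exact: jn_id. Qed.
Lemma neg_0 x : le 0 x -> neg x = 0.
Proof. by move=> h; rewrite /bneg jnC; apply: jn_id; rewrite -oppr0; apply: le_opp. Qed.
Lemma pos_mono x y : le x y -> le (pos x) (pos y).
Proof. by move=> h; apply: jn_mono => //; apply: le_rf. Qed.
Lemma posE x : pos x = x + neg x.
Proof. by rewrite /bpos /bneg addrC -jnD addNr add0r jnC. Qed.
Lemma pos_negE x : x = pos x - neg x.
Proof. by rewrite posE addrK. Qed.
Lemma posZ a x : 0 < a -> pos (a *: x) = a *: pos x.
Proof. by move=> a0; rewrite /bpos -jnZ // scaler0. Qed.
Lemma negZ a x : 0 < a -> neg (a *: x) = a *: neg x.
Proof. by move=> a0; rewrite /bneg -jnZ // scaler0 scalerN. Qed.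
Lemma pos_le_ab x : le (pos x) (ab x).
Proof. apply: jn_lub; [exact: ab_ge|exact: ab_ge0]. Qed.
Lemma neg_le_ab x : le (neg x) (ab x).
Proof. apply: jn_lub; [exact: ab_geN|exact: ab_ge0]. Qed.
Lemma norm_pos x : `|pos x| <= `|x|.
Proof. rewrite -[`|x|]norm_ab; apply: norm_mono; [exact: pos_ge0|exact: pos_le_ab]. Qed.
Lemma norm_neg x : `|neg x| <= `|x|.
Proof. rewrite -[`|x|]norm_ab; apply: norm_mono; [exact: neg_ge0|exact: neg_le_ab]. Qed.

Lemma mt_ge0 x y : le 0 x -> le 0 y -> le 0 (mt x y).
Proof. exact: mt_glb. Qed.

Lemma mt_pos_neg x : mt (pos x) (neg x) = 0.
Proof.
rewrite posE -{2}(add0r (neg x)) mtD mt_def oppr0.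
by rewrite /bneg addNr.
Qed.

Lemma mt_disj_sc x y b : le 0 x -> le 0 y -> mt x y = 0 -> 1 <= b -> mt x (b *: y) = 0.
Proof.
move=> hx hy h b1; have b0 : 0 < b by apply: lt_le_trans b1.
apply: le_an; last by apply: mt_ge0 => //; apply: le_sc0 => //; exact: ltW.
apply: (le_tr (y := mt (b *: x) (b *: y))); last first.
  by rewrite mtZ // h scaler0; exact: le_rf.
apply: mt_mono; last exact: le_rf.
apply: le_0sub; rewrite -{2}(scale1r x) -scalerBl; apply: le_sc0 => //.
by rewrite subr_ge0.
Qed.

Lemma le_subl x y z : le x (y + z) -> le (x - y) z.
Proof. by move=> /(ble_add (- y)); rewrite [y + z]addrC addrK. Qed.

Lemma le_sub_np x y z : le x y -> le 0 z -> le (x - y) z.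
Proof. by move=> /(ble_add (- y)); rewrite subrr => h1 h2; apply: le_tr h1 h2. Qed.

Lemma le_sub_pos x a c : le 0 a -> le x c -> le (x - a) c.
Proof.
move=> ha hc; apply: le_tr hc; have := le_addl x (le_opp ha).
by rewrite oppr0 addr0.
Qed.

Lemma mt_subadd a b c : le 0 a -> le 0 b -> le 0 c ->
  le (mt (a + b) c) (mt a c + mt b c).
Proof.
move=> ha hb hc; set w := mt (a + b) c.
have h : le (w - mt a c) (mt b c).
  have -> : w - mt a c = jn (w - a) (w - c).
    by rewrite mt_def opprK addrC -jnD !(addrC _ w).
  apply: mt_glb; apply: jn_lub.
  - by apply: le_subl; apply: mt_l.
  - by apply: le_sub_np => //; apply: mt_r.
  - by apply: le_sub_pos => //; apply: mt_r.
  - by apply: le_sub_np => //; apply: mt_r.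
by move: (ble_add (mt a c) h); rewrite subrK addrC.
Qed.

End Lat.

Section Dual.
Variables (R : realType) (X : normedModType R).

Section OneF.
Variable f : X -> R.
Hypothesis hf : is_dual f.

Lemma d0 : f 0 = 0.
Proof.
have := hf.1 1 0 0; rewrite scale1r addr0 mul1r => h.
by have := h; rewrite -{1}[f 0]addr0 => /addrI.
Qed.
Lemma dD x y : f (x + y) = f x + f y.
Proof. by have := hf.1 1 x y; rewrite scale1r mul1r. Qed.
Lemma dZ a x : f (a *: x) = a * f x.
Proof. by have := hf.1 a x 0; rewrite addr0 d0 addr0. Qed.
Lemma dN x : f (- x) = - f x.
Proof. by rewrite -scaleN1r dZ mulN1r. Qed.
Lemma dB x y : f (x - y) = f x - f y.
Proof. by rewrite dD dN. Qed.

Lemma d_bounded : exists2 C, 0 < C & forall x, `|f x| <= C * `|x|.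
Proof.
have c0 : f @ (0 : X) --> (0 : R) by rewrite -d0; exact: hf.2.
have h1 := cvgr0_norm_lt _ c0 _ ltr01.
have h2 : \forall t \near (0:X), `|f t| < 1 by apply: h1; apply: nbhs_filter.
have [e /= e0 he] := nbhs_norm0P.1 h2.
exists (2 / e); first by rewrite divr_gt0.
move=> x; have [->|x0] := eqVneq x 0; first by rewrite d0 !normr0 mulr0.
have nx : 0 < `|x| by rewrite normr_gt0.
set t := e / (2 * `|x|).
have t0 : 0 < t by rewrite divr_gt0 // mulr_gt0.
have : `|f (t *: x)| < 1.
  apply: he => /=; rewrite normrZ gtr0_norm // /t.
  have -> : e / (2 * `|x|) * `|x| = e / 2.
    by field; rewrite gt_eqF.
  by rewrite ltr_pdivrMr // ltr_pMr // ltr1n.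
rewrite dZ normrM gtr0_norm // => h.
apply: ltW.
have -> : 2 / e * `|x| = t^-1 by rewrite /t; field; rewrite !gt_eqF.
by rewrite -(ltr_pM2l t0) mulfV ?gt_eqF.
Qed.

Lemma dn_has_ub : has_ubound [set `|f x| | x in [set x : X | `|x| <= 1]].
Proof.
have [C C0 hC] := d_bounded.
exists C => _ [x /= hx <-]; apply: le_trans (hC x) _.
by rewrite ler_piMr // ltW.
Qed.

Lemma dn_ub x : `|x| <= 1 -> `|f x| <= dnorm f.
Proof. by move=> hx; apply: (ub_le_sup dn_has_ub); exists x. Qed.

Lemma dn_ge0 : 0 <= dnorm f.
Proof. by have := dn_ub (x := 0); rewrite d0 !normr0 => ->. Qed.

Lemma dn_bound x : `|f x| <= dnorm f * `|x|.
Proof.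
have [->|x0] := eqVneq x 0; first by rewrite d0 !normr0 mulr0.
have nx : 0 < `|x| by rewrite normr_gt0.
have h := dn_ub (x := `|x|^-1 *: x).
rewrite normrZ ger0_norm ?invr_ge0 ?(ltW nx) // mulVf ?gt_eqF // in h.
move: (h (lexx _)); rewrite dZ normrM ger0_norm ?invr_ge0 ?(ltW nx) // => h2.
by have := ler_wpM2r (ltW nx) h2; rewrite mulrAC mulVf ?mul1r // ?gt_eqF.
Qed.

Lemma dn_le C : (forall x, `|x| <= 1 -> `|f x| <= C) -> dnorm f <= C.
Proof.
move=> h; apply: ge_sup; first by exists `|f 0|, 0 => //=; rewrite normr0.
by move=> _ [x /= hx <-]; apply: h.
Qed.

End OneF.
Lemma bounded_cont (g : X -> R) C :
  (forall a x y, g (a *: x + y) = a * g x + g y) ->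
  (forall x, `|g x| <= C * `|x|) -> continuous g.
Proof.
move=> hl hb x; apply/cvgrPdist_lt => e e0.
have C1 : 0 < `|C| + 1 by rewrite ltr_wpDl.
apply/nbhs_normP; exists (e / (`|C| + 1)) => /=; first by rewrite divr_gt0.
move=> y /= hy.
have -> : g x - g y = g ((-1) *: y + x) by rewrite hl mulN1r addrC.
rewrite scaleN1r addrC; apply: le_lt_trans (hb _) _.
apply: le_lt_trans (ler_wpM2r (normr_ge0 _) (ler_norm C)) _.
have : `|C| * `|x - y| <= `|C| * (e / (`|C| + 1)).
  by apply: ler_wpM2l => //; apply: ltW.
move=> /le_lt_trans; apply.
rewrite mulrA ltr_pdivrMr // mulrC ltr_pM2l //.
by rewrite ltrDl.
Qed.

End Dual.

Section PF.
Variables (R : realType) (E : completeNormedModType R) (L : BLattice R E).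
Local Notation le := (ble L).
Local Notation jn := (bjoin L).
Local Notation mt := (bmeet L).
Local Notation ab := (babs L).

Lemma pf_mono (f : E -> R) x y : is_dual f -> dle L (fun _ => 0) f -> le x y -> f x <= f y.
Proof.
move=> hf hp h; have := hp _ (le_sub0 h); rewrite dB // subr_ge0; exact.
Qed.

Lemma pf_abs (f : E -> R) x : is_dual f -> dle L (fun _ => 0) f -> `|f x| <= f (ab x).
Proof.
move=> hf hp; rewrite ler_norml; apply/andP; split.
  by rewrite lerNl -dN //; apply: pf_mono => //; apply: ab_geN.
by apply: pf_mono => //; apply: ab_ge.
Qed.

Lemma pf_big (f : E -> R) eps : is_dual f -> dle L (fun _ => 0) f -> eps < dnorm f ->
  exists x, [/\ le 0 x, `|x| <= 1 & eps < f x].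
Proof.
move=> hf hp; apply: contraPP => /forallNP hn.
apply/negP; rewrite -leNgt; apply: dn_le => // x hx.
have := hn (ab x); rewrite norm_ab hx => hx2.
apply: le_trans (pf_abs x hf hp) _; rewrite leNgt; apply/negP => h.
by apply: hx2; split => //; apply: ab_ge0.
Qed.

Lemma d_sum (f : E -> R) (d : nat -> E) (s : seq nat) : is_dual f ->
  f (\sum_(k <- s) d k) = \sum_(k <- s) f (d k).
Proof.
move=> hf; elim: s => [|a s IH]; first by rewrite !big_nil d0.
by rewrite !big_cons dD // IH.
Qed.

Section Disj.
Variables (d : nat -> E) (v : E).
Hypothesis d0 : forall n, le 0 (d n).
Hypothesis dv : forall n, le (d n) v.
Hypothesis dd : forall n m, n != m -> mt (d n) (d m) = 0.

Lemma sum_ge0 s : le 0 (\sum_(k <- s) d k).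
Proof.
elim: s => [|a s IH]; first by rewrite big_nil; apply: le_rf.
by rewrite big_cons; apply: le_D0.
Qed.

Lemma sum_disj a s : a \notin s -> mt (\sum_(k <- s) d k) (d a) = 0.
Proof.
elim: s => [|b s IH].
  move=> _; rewrite big_nil; apply: le_an; first exact: mt_l.
  by apply: mt_ge0 => //; apply: le_rf.
rewrite in_cons negb_or => /andP [ab hs].
rewrite big_cons; apply: le_an; last by apply: mt_ge0 => //; apply: le_D0 => //; apply: sum_ge0.
apply: le_tr (mt_subadd (d0 b) (sum_ge0 s) (d0 a)) _.
by rewrite dd 1?eq_sym // IH // add0r; apply: le_rf.
Qed.

Lemma sum_le s : uniq s -> le (\sum_(k <- s) d k) v.
Proof.
elim: s => [|a s IH]; first by move=> _; rewrite big_nil; exact: le_tr (d0 0) (dv 0).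
move=> /= /andP [ha hs]; rewrite big_cons (add_jn_mt L) mtC sum_disj // addr0.
by apply: jn_lub => //; apply: IH.
Qed.

Lemma inf_often_seq (P : nat -> Prop) : (forall N, exists2 n, (N <= n)%N & P n) ->
  forall M, exists s : seq nat, [/\ uniq s, size s = M & forall k, k \in s -> P k].
Proof.
move=> hP; elim=> [|M [s [us ss hs]]]; first by exists [::].
have [n hn Pn] := hP (\max_(k <- s) k).+1.
exists (n :: s); split => //=.
- rewrite us andbT; apply/negP => ns.
  have := @leq_bigmax_seq _ s xpredT (fun k => k) n ns isT; rewrite leqNgt hn.
  by move/negP; apply.
- by rewrite ss.
- by move=> k; rewrite in_cons => /orP [/eqP ->|/hs].
Qed.

Lemma disj_bounded (f : E -> R) e : is_dual f -> 0 < e ->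
  (forall N, exists2 n, (N <= n)%N & e <= f (d n)) -> False.
Proof.
move=> hf e0 hP.
set K := dnorm f * `|v|.
have K0 : 0 <= K by rewrite mulr_ge0 // dn_ge0.
have [s [us ss hs]] := inf_often_seq hP (Num.Def.archi_bound (K / e)).
have := archi_boundP (divr_ge0 K0 (ltW e0)); rewrite -ss ltr_pdivrMr // => hK.
have : (size s)%:R * e <= K.
  have -> : (size s)%:R * e = \sum_(k <- s) e.
    elim: (s) => [|a t IH]; first by rewrite big_nil mul0r.
    by rewrite big_cons -IH /= mulrSr mulrDl mul1r addrC.
  apply: le_trans (_ : \sum_(k <- s) f (d k) <= K).
    by rewrite big_seq_cond [X in _ <= X]big_seq_cond; apply: ler_sum => k /andP [/hs ? _].
  rewrite -d_sum //; apply: le_trans (ler_norm _) _; apply: le_trans (dn_bound _ _) _ => //.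
  apply: ler_wpM2l; first exact: dn_ge0.
  apply: norm_mono; [exact: sum_ge0|exact: sum_le].
by rewrite leNgt hK.
Qed.

Lemma disj_wnull : weakly_null d.
Proof.
move=> f hf; apply/cvgr0Pnorm_lt => e e0.
apply: contrapT => hn.
have hP : forall N, exists2 n, (N <= n)%N & e <= `|f (d n)|.
  move=> N; apply: contrapT => /forall2NP hN; apply: hn; exists N => // n /= hn'.
  by case: (hN n) => // /negP; rewrite -ltNge.
have [h1|h2] : (forall N, exists2 n, (N <= n)%N & e <= f (d n)) \/
               (forall N, exists2 n, (N <= n)%N & e <= - f (d n)).
  apply: contrapT => /not_orP [/existsNP [N1 h1] /existsNP [N2 h2]].
  have [n hnn hen] := hP (maxn N1 N2).
  move: hnn; rewrite geq_max => /andP [n1 n2].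
  move: hen; rewrite ler_normr => /orP [hA|hB].
    by apply: h1; exists n.
  by apply: h2; exists n.
- exact: disj_bounded hf e0 h1.
- have hf' : is_dual (fun x => - f x).
    split; first by move=> a x y; rewrite hf.1 opprD mulrN.
    by move=> x; apply: cvgN; apply: hf.2.
  exact: disj_bounded hf' e0 h2.
Qed.

End Disj.
End PF.

Section Main.
Variables (R : realType) (E F : completeNormedModType R) (L : BLattice R E).
Local Notation le := (ble L).
Local Notation mt := (bmeet L).

Lemma disj_uaw (y : nat -> E) : (forall n, le 0 (y n)) ->
  (forall n m, n != m -> mt (y n) (y m) = 0) -> uaw_null L y.
Proof.
move=> y0 yd u u0.
have -> : (fun n => bmeet L (babs L (y n)) u) = (fun n => mt (y n) u).
  by apply: funext => n; rewrite ab_id.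
apply: (disj_wnull (v := u)).
- by move=> n; apply: mt_ge0.
- by move=> n; apply: mt_r.
- move=> n m nm; apply: le_an; last by apply: mt_ge0; apply: mt_ge0.
  by rewrite -(yd n m nm); apply: mt_mono; apply: mt_l.
Qed.

Lemma main_rank1
  (H : forall T : E -> F, is_operator T -> weak_DP T -> uaw_DP L T)
  (y0 : F) (hy : y0 != 0) (f : E -> R) (hf : is_dual f) (x : nat -> E) :
  (exists M : R, forall n, `|x n| <= M) -> uaw_null L x ->
  (fun n => f (x n)) @ \oo --> (0 : R).
Proof.
move=> xb xu.
pose T := fun z : E => f z *: y0.
have opT : is_operator T.
  split.
    by move=> a z w; rewrite /T hf.1 scalerDl scalerA.
  by move=> z; apply: cvgZr_tmp; apply: hf.2.
have wT : weak_DP T.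
  move=> z g zw gw.
  have -> : (fun n => g n (T (z n))) = (fun n => f (z n) * g n y0).
    by apply: funext => n; rewrite /T dZ //; apply: gw.1.
  have hg : (fun n => g n y0) @ \oo --> (0 : R).
    apply: (gw.2 (fun h => h y0)); split; first by [].
    by exists `|y0| => h hh; rewrite mulrC; apply: dn_bound.
  have hc := cvgM (zw f hf) hg; rewrite mulr0 in hc; exact: hc.
have hT := H T opT wT x xb xu.
have ny : 0 < `|y0| by rewrite normr_gt0.
apply/cvgr0Pnorm_lt => e e0.
have h1 := cvgr0_norm_lt _ hT _ (mulr_gt0 e0 ny).
have h2 : \forall n \near \oo, `| `|T (x n)| | < e * `|y0|.
  by apply: h1; apply: filter_nbhs_filter.
apply: filterS h2 => n /=; rewrite /T normr_id normrZ.
by rewrite ltr_pM2r.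
Qed.

End Main.

Section Dom.
Variables (R : realType) (E : completeNormedModType R) (L : BLattice R E).
Local Notation le := (ble L).
Local Notation mt := (bmeet L).

Lemma cone_closed (z : nat -> E) (w : E) N0 : z @ \oo --> w ->
  (forall n, (N0 <= n)%N -> le 0 (z n)) -> le 0 w.
Proof.
move=> zw zp.
have hn : forall n, (N0 <= n)%N -> `|bneg L w| <= `|w - z n|.
  move=> n hn; rewrite -[`|w - z n|]normrN opprB -(norm_ab L (z n - w)).
  apply: norm_mono; first exact: neg_ge0.
  apply: jn_lub; last exact: ab_ge0.
  apply: le_tr (ab_ge L _); rewrite -[X in le X _]add0r; apply: le_subr; exact: zp.
have n0 : `|bneg L w| <= 0.
  apply/ler_addgt0Pr => e e0; rewrite add0r.
  have h1 := cvgr_dist_lt _ _ zw _ e0.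
  have [N _ hN] : \forall n \near \oo, `|w - z n| < e by apply: h1.
  apply: le_trans (hn (maxn N N0) (leq_maxr _ _)) _.
  by apply: ltW; apply: hN; rewrite /= leq_maxl.
have : bneg L w = 0 by apply/normr0_eq0/eqP; rewrite eq_le n0 normr_ge0.
by move=> h0; rewrite (pos_negE L w) h0 subr0; apply: pos_ge0.
Qed.

Lemma dom_exists (x : nat -> E) : (forall k, le 0 (x k)) -> (forall k, `|x k| <= 1) ->
  exists u, forall k, le ((2^-1 : R) ^+ k.+1 *: x k) u.
Proof.
move=> x0 x1.
set r : R := 2^-1.
have r0 : 0 <= r by rewrite invr_ge0.
have r1 : `|r| < 1 by rewrite ger0_norm // invf_lt1 // ltr1n.
set v := fun k => r ^+ k.+1 *: x k.
have v0 : forall k, le 0 (v k) by move=> k; apply: le_sc0 => //; rewrite exprn_ge0.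
have cv : cvgn (series v).
  apply: normed_cvg.
  apply: (series_le_cvg (v_ := geometric r r)).
  - by move=> n; rewrite normr_ge0.
  - by move=> n; rewrite /= mulr_ge0 // exprn_ge0.
  - move=> n; rewrite /v /= normrZ ger0_norm ?exprn_ge0 // exprS.
    by rewrite ler_piMr ?mulr_ge0 ?exprn_ge0.
  - by apply/cvg_ex; exists (r * (1 - r)^-1); apply: cvg_geometric_series.
exists (limn (series v)) => k.
have hs : forall M, le 0 (series v M) /\ ((k < M)%N -> le (v k) (series v M)).
  elim=> [|M [IH1 IH2]].
    by split => //; rewrite /series /= big_geq //; apply: le_rf.
  rewrite seriesSr; split; first exact: le_D0.
  rewrite ltnS leq_eqVlt => /orP [/eqP ->|kM].
    by rewrite -[X in le X _]add0r; apply: le_D => //; apply: le_rf.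
  by rewrite -[X in le X _]addr0; apply: le_D => //; apply: IH2.
apply: le_0sub.
apply: (@cone_closed (fun M => series v M - v k) _ k.+1).
  by apply: cvgB => //; apply: cvg_cst.
by move=> n hn; apply: le_sub0; apply: (hs n).2.
Qed.

End Dom.

Section Net.
Variables (R : realType) (E : completeNormedModType R) (L : BLattice R E).
Local Notation le := (ble L).
Variables (I : Type) (leI : I -> I -> Prop) (f : I -> E -> R).
Hypothesis hdir : directed leI.
Hypothesis hdual : forall i, is_dual (f i).
Hypothesis hdec : forall i j, leI i j -> dle L (f j) (f i).
Hypothesis hpos : forall i, dle L (fun _ => 0) (f i).
Hypothesis hinf : forall h, is_dual h -> (forall i, dle L h (f i)) -> dle L h (fun _ => 0).

Let i0 : I := projT1 (cid hdir.1).

Definition pinf (x : E) : R := inf [set f i x | i in [set: I]].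

Lemma pset_ne x : [set f i x | i in [set: I]] !=set0.
Proof. by exists (f i0 x), i0. Qed.

Lemma pset_lb x : le 0 x -> has_lbound [set f i x | i in [set: I]].
Proof. by move=> hx; exists 0 => _ [i _ <-]; apply: hpos. Qed.

Lemma p_le x i : le 0 x -> pinf x <= f i x.
Proof. by move=> hx; apply: (ge_inf (pset_lb hx)); exists i. Qed.

Lemma p_ge x c : (forall i, c <= f i x) -> c <= pinf x.
Proof. by move=> h; apply: lb_le_inf; [exact: pset_ne|move=> _ [i _ <-]]. Qed.

Lemma p_ge0 x : le 0 x -> 0 <= pinf x.
Proof. by move=> hx; apply: p_ge => i; apply: hpos. Qed.

Lemma p_lt x c : pinf x < c -> exists i, f i x < c.
Proof. by move=> /(inf_lt (pset_ne x)) [_ [i _ <-] h]; exists i. Qed.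

Lemma p0 : pinf 0 = 0.
Proof.
apply/eqP; rewrite eq_le p_ge0 ?andbT; last exact: le_rf.
by apply: le_trans (p_le i0 (le_rf L 0)) _; rewrite d0.
Qed.

Lemma pD a b : le 0 a -> le 0 b -> pinf (a + b) = pinf a + pinf b.
Proof.
move=> ha hb; apply/eqP; rewrite eq_le; apply/andP; split; last first.
  by apply: p_ge => i; rewrite dD //; apply: lerD; apply: p_le.
apply/ler_addgt0Pr => e e0.
have e2 : 0 < e / 2 by rewrite divr_gt0.
have [i hi] := p_lt (ltr_pwDr e2 (lexx (pinf a))).
have [j hj] := p_lt (ltr_pwDr e2 (lexx (pinf b))).
have [k [ik jk]] := hdir.2.2.2 i j.
apply: le_trans (p_le k (le_D0 ha hb)) _; rewrite dD //.
apply: le_trans (lerD (hdec ik ha) (hdec jk hb)) _.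
lra.
Qed.

Lemma pZ c a : 0 <= c -> le 0 a -> pinf (c *: a) = c * pinf a.
Proof.
move=> c0 ha; have [->|cn0] := eqVneq c 0; first by rewrite scale0r p0 mul0r.
have cp : 0 < c by rewrite lt0r cn0.
apply/eqP; rewrite eq_le; apply/andP; split; last first.
  by apply: p_ge => i; rewrite dZ // ler_wpM2l // p_le.
rewrite -ler_pdivrMl //; apply: p_ge => i.
rewrite ler_pdivrMl //; rewrite -dZ //; apply: p_le; exact: le_sc0.
Qed.

Lemma p_diff a b c d : le 0 a -> le 0 b -> le 0 c -> le 0 d -> a - b = c - d ->
  pinf a - pinf b = pinf c - pinf d.
Proof.
move=> ha hb hc hd h.
have h2 : a + d = c + b by rewrite -[a](subrK b) h addrAC subrK.
have := congr1 pinf h2; rewrite !pD // => h3; lra.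
Qed.

Definition hinfun (x : E) : R := pinf (bpos L x) - pinf (bneg L x).

Lemma h_dec x a b : le 0 a -> le 0 b -> x = a - b -> hinfun x = pinf a - pinf b.
Proof.
move=> ha hb hx; apply: p_diff => //; [exact: pos_ge0|exact: neg_ge0|].
by rewrite -hx -pos_negE.
Qed.

Lemma h_lin a x y : hinfun (a *: x + y) = a * hinfun x + hinfun y.
Proof.
have hpx := pos_ge0 L x; have hnx := neg_ge0 L x.
have hpy := pos_ge0 L y; have hny := neg_ge0 L y.
have [a0|a0] := leP 0 a.
  have s1 := le_sc0 a0 hpx; have s2 := le_sc0 a0 hnx.
  rewrite (@h_dec _ (a *: bpos L x + bpos L y) (a *: bneg L x + bneg L y)).
  - rewrite (pD s1 hpy) (pD s2 hny) (pZ a0 hpx) (pZ a0 hnx) /hinfun; ring.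
  - exact: le_D0.
  - exact: le_D0.
  - rewrite {1}(pos_negE L x) {1}(pos_negE L y) scalerBr.
    by rewrite opprD addrACA.
have na : 0 <= - a by rewrite oppr_ge0 ltW.
have s1 := le_sc0 na hpx; have s2 := le_sc0 na hnx.
rewrite (@h_dec _ ((- a) *: bneg L x + bpos L y) ((- a) *: bpos L x + bneg L y)).
- rewrite (pD s2 hpy) (pD s1 hny) (pZ na hpx) (pZ na hnx) /hinfun; ring.
- exact: le_D0.
- exact: le_D0.
- rewrite {1}(pos_negE L x) {1}(pos_negE L y) !scaleNr scalerBr.
  by rewrite opprD opprK [in RHS]addrACA [- _ + a *: _]addrC.
Qed.

Lemma p_pos_bound z : le 0 z -> pinf z <= dnorm (f i0) * `|z|.
Proof.
move=> hz; apply: le_trans (p_le i0 hz) _.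
apply: le_trans (ler_norm _) _; exact: dn_bound.
Qed.

Lemma h_bound x : `|hinfun x| <= (2 * dnorm (f i0)) * `|x|.
Proof.
have hp := p_pos_bound (pos_ge0 L x); have hn := p_pos_bound (neg_ge0 L x).
have g1 := p_ge0 (pos_ge0 L x); have g2 := p_ge0 (neg_ge0 L x).
have n1 := norm_pos L x; have n2 := norm_neg L x.
have d0 : 0 <= dnorm (f i0) by apply: dn_ge0.
have m1 := ler_wpM2l d0 n1; have m2 := ler_wpM2l d0 n2.
rewrite /hinfun ler_norml; apply/andP; split; nra.
Qed.

Lemma h_dual : is_dual hinfun.
Proof. split; [exact: h_lin|exact: bounded_cont h_lin h_bound]. Qed.

Lemma h_val x : le 0 x -> hinfun x = pinf x.
Proof.
move=> hx; rewrite (@h_dec x x 0) ?p0 ?subr0 //; exact: le_rf.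
Qed.

Lemma h_le i : dle L hinfun (f i).
Proof. by move=> x hx; rewrite h_val //; apply: p_le. Qed.

Lemma net_pointwise x : le 0 x -> forall eta, 0 < eta -> exists i, f i x < eta.
Proof.
move=> hx eta e0; apply: p_lt.
have := hinf h_dual h_le hx; rewrite h_val // => h.
exact: le_lt_trans h e0.
Qed.

End Net.

Section Disj2.
Variables (R : realType) (E : completeNormedModType R) (L : BLattice R E).
Local Notation le := (ble L).
Local Notation mt := (bmeet L).

Lemma disj2 a b (al be : R) : le 0 a -> le 0 b -> 0 < al -> 1 <= be -> 1 <= al * be ->
  mt (bpos L (a - al *: b)) (bpos L (b - be *: a)) = 0.
Proof.
move=> ha hb al0 be1 ab1.
have be0 : 0 < be by apply: lt_le_trans be1.
set z := a - al *: b.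
have h1 : le (bpos L (b - be *: a)) (be *: bneg L z).
  have -> : b - be *: a = be *: (be^-1 *: b - a).
    by rewrite scalerBr scalerA divff ?scale1r // gt_eqF.
  rewrite posZ //; apply: le_sc; first exact: ltW.
  apply: pos_mono; rewrite /z opprB; apply: le_subr.
  apply: le_0sub; rewrite -scalerBl; apply: le_sc0 => //.
  rewrite subr_ge0 -(ler_pM2r be0) mulVf ?gt_eqF //.
apply: le_an; last by apply: mt_ge0; apply: pos_ge0.
rewrite -(mt_disj_sc (pos_ge0 L z) (neg_ge0 L z) (mt_pos_neg L z) be1).
apply: mt_mono => //; exact: le_rf.
Qed.

End Disj2.

Section Seq.
Variables (R : realType) (E : completeNormedModType R) (L : BLattice R E).
Local Notation le := (ble L).
Local Notation mt := (bmeet L).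
Variables (I : Type) (leI : I -> I -> Prop) (f : I -> E -> R).
Hypothesis hdir : directed leI.
Hypothesis hdual : forall i, is_dual (f i).
Hypothesis hdec : forall i j, leI i j -> dle L (f j) (f i).
Hypothesis hpos : forall i, dle L (fun _ => 0) (f i).
Variables (eps : R) (step : I -> E -> R -> I * E) (j0 : I).
Hypothesis eps0 : 0 < eps.
Hypothesis hstep : forall j s d, 0 < d -> le 0 s ->
  [/\ leI j (step j s d).1, f (step j s d).1 s < d, le 0 (step j s d).2,
      `|(step j s d).2| <= 1 & eps < f (step j s d).1 (step j s d).2].
Hypothesis Hw : forall g, is_dual g -> forall x : nat -> E,
  (exists M : R, forall n, `|x n| <= M) -> uaw_null L x ->
  (fun n => g (x n)) @ \oo --> (0 : R).

Definition dl n : R := eps / (4 * 4 ^+ n.+1).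

Lemma dl0 n : 0 < dl n.
Proof. by rewrite divr_gt0 // mulr_gt0 // exprn_gt0. Qed.

Fixpoint seqA n : I * E * E := match n with
 | 0 => let p := step j0 0 (dl 0) in (p.1, p.2, p.2)
 | m.+1 => let q := seqA m in let p := step q.1.1 q.2 (dl m.+1) in (p.1, p.2, q.2 + p.2)
 end.

Definition ii n := (seqA n).1.1.
Definition xx n := (seqA n).1.2.
Definition TT n := (seqA n).2.
Definition args n : I * E := match n with 0 => (j0, 0) | m.+1 => (ii m, TT m) end.
Definition TP n := (args n).2.

Lemma iiE n : ii n = (step (args n).1 (args n).2 (dl n)).1.
Proof. by case: n. Qed.
Lemma xxE n : xx n = (step (args n).1 (args n).2 (dl n)).2.
Proof. by case: n. Qed.
Lemma TTE n : TT n = TP n + xx n.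
Proof. by case: n => [|n] /=; rewrite /TT /TP /xx /= ?add0r. Qed.

Lemma TP_ge0 n : le 0 (TP n).
Proof.
elim: n => [|n IH]; first exact: le_rf.
rewrite /TP /= -/(TT n) TTE; apply: le_D0 => //.
by rewrite xxE; case: (hstep (args n).1 (dl0 n) IH).
Qed.

Lemma props n : [/\ leI (args n).1 (ii n), f (ii n) (TP n) < dl n, le 0 (xx n),
      `|xx n| <= 1 & eps < f (ii n) (xx n)].
Proof. by rewrite iiE xxE; case: (hstep (args n).1 (dl0 n) (TP_ge0 n)). Qed.

Lemma ii_chain n : leI (ii 0) (ii n).
Proof.
elim: n => [|n IH]; first exact: hdir.2.1.
apply: hdir.2.2.1 IH _; by case: (props n.+1) => /= h *; exact: h.
Qed.

Lemma xx_le_TP k m : (k < m)%N -> le (xx k) (TP m).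
Proof.
elim: m => [//|m IH]; rewrite ltnS leq_eqVlt => /orP [/eqP ->|km].
  rewrite /TP /= -/(TT m) TTE -[X in le X _]add0r; apply: le_D; first exact: TP_ge0.
  exact: le_rf.
rewrite /TP /= -/(TT m) TTE -[X in le X _]addr0; apply: le_D; first exact: IH.
by case: (props m).
Qed.

Lemma xx_ge0 n : le 0 (xx n). Proof. by case: (props n). Qed.
Lemma xx_le1 n : `|xx n| <= 1. Proof. by case: (props n). Qed.
Lemma xx_big n : eps < f (ii n) (xx n). Proof. by case: (props n). Qed.
Lemma TP_small n : f (ii n) (TP n) < dl n. Proof. by case: (props n). Qed.

Lemma ineq_ab (r : R) n m : r = 2^-1 -> (n < m)%N -> 1 <= r ^+ n * r ^+ m.+1 * 4 ^+ m.+1.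
Proof.
move=> -> nm.
have r0 : (0 : R) <= 2^-1 by rewrite invr_ge0.
have h1 : (2^-1 : R) ^+ m <= 2^-1 ^+ n.
  apply: ler_wiXn2l => //; last exact: ltnW.
  by rewrite invf_le1 // ler1n.
have h2 : (2^-1 : R) ^+ m * 2^-1 ^+ m.+1 * 4 ^+ m.+1 = 2.
  rewrite -mulrA -exprMn (_ : 2^-1 * 4 = (2 : R)); last by field.
  by rewrite exprS mulrCA -exprMn mulVf ?expr1n ?mulr1 // pnatr_eq0.
apply: le_trans (_ : 1 <= 2) _; first by rewrite ler1n.
apply: le_trans (_ : 2 <= 2^-1 ^+ m * 2^-1 ^+ m.+1 * 4 ^+ m.+1) _; first by rewrite h2.
apply: ler_wpM2r; first exact: exprn_ge0.
by apply: ler_wpM2r => //; exact: exprn_ge0.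
Qed.

Lemma seq_false : False.
Proof.
set r : R := 2^-1.
have r0 : 0 <= r by rewrite invr_ge0.
have [u hu] := dom_exists xx_ge0 xx_le1.
have u0 : le 0 u.
  apply: le_tr (hu 0); apply: le_sc0; [exact: exprn_ge0|exact: xx_ge0].
pose y n := bpos L (xx n - 4 ^+ n.+1 *: TP n - r ^+ n *: u).
have A0 : forall n, le 0 (4 ^+ n.+1 *: TP n) by move=> n; apply: le_sc0; [exact: exprn_ge0|exact: TP_ge0].
have B0 : forall n, le 0 (r ^+ n *: u) by move=> n; apply: le_sc0; [exact: exprn_ge0|].
have y0 : forall n, le 0 (y n) by move=> n; apply: pos_ge0.
have yle : forall n, le (y n) (xx n).
  move=> n; rewrite -(pos_id (xx_ge0 n)); apply: pos_mono.
  apply: le_sub_pos => //; apply: le_sub_pos => //; exact: le_rf.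
have ynorm : forall n, `|y n| <= 1.
  by move=> n; apply: le_trans (xx_le1 n); apply: norm_mono.
have drop1 : forall x a b c, le 0 a -> le (x - b) c -> le (x - a - b) c.
  move=> x a b c ha h; apply: le_tr h; apply: le_subr; apply: le_sub_pos => //; exact: le_rf.
have ylt : forall n m, (n < m)%N -> mt (y n) (y m) = 0.
  move=> n m nm.
  set al := r ^+ n * r ^+ m.+1.
  have al0 : 0 < al by rewrite mulr_gt0 // exprn_gt0 // invr_gt0.
  have h1 : le (y n) (bpos L (xx n - al *: xx m)).
    apply: pos_mono; apply: drop1 => //; apply: le_addl; apply: le_opp.
    rewrite /al -scalerA; apply: le_sc; [exact: exprn_ge0|exact: hu].
  have h2 : le (y m) (bpos L (xx m - 4 ^+ m.+1 *: xx n)).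
    apply: pos_mono; apply: le_sub_pos => //; apply: le_addl; apply: le_opp.
    apply: le_sc; [exact: exprn_ge0|exact: xx_le_TP].
  apply: le_an; last by apply: mt_ge0.
  rewrite -(@disj2 _ _ L (xx n) (xx m) al (4 ^+ m.+1) (xx_ge0 n) (xx_ge0 m) al0).
  - exact: mt_mono.
  - by apply: exprn_ege1; rewrite ler1n.
  - by apply: (@ineq_ab r).
have yd : forall n m, n != m -> mt (y n) (y m) = 0.
  move=> n m; rewrite neq_ltn => /orP [nm|mn]; first exact: ylt.
  by rewrite mtC; apply: ylt.
set g := f (ii 0).
have hg := Hw (hdual (ii 0)) (ex_intro _ 1 ynorm) (disj_uaw y0 yd).
set K := g u.
have K0 : 0 <= K by apply: hpos.
have lb : forall n, eps - eps / 4 - r ^+ n * K <= g (y n).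
  move=> n.
  have c1 : leI (ii 0) (ii n) := ii_chain n.
  apply: le_trans (hdec c1 (y0 n)).
  apply: le_trans (pf_mono (hdual _) (hpos _) (pos_ge L _)).
  rewrite !(dB (hdual (ii n))) !(dZ (hdual (ii n))).
  have t1 := xx_big n; have t2 := TP_small n.
  have t3 : f (ii n) u <= K by apply: hdec.
  have t4 : 4 ^+ n.+1 * dl n = eps / 4.
    by rewrite /dl; field; rewrite !gt_eqF // ?exprn_gt0.
  have t5 : 0 <= r ^+ n by apply: exprn_ge0.
  have t6 : 0 < (4 : R) ^+ n.+1 by apply: exprn_gt0.
  have t7 : 4 ^+ n.+1 * f (ii n) (TP n) < 4 ^+ n.+1 * dl n by rewrite ltr_pM2l.
  have t8 := ler_wpM2l t5 t3.
  move: t7; rewrite t4 => t7; lra.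
have rK : (fun n => r ^+ n * K) @ \oo --> (0 : R).
  have hr : (fun n => r ^+ n) @ \oo --> (0 : R).
    by apply: cvg_expr; rewrite ger0_norm // invf_lt1 // ltr1n.
  have := cvgM hr (cvg_cst K); rewrite mul0r; exact.
have e4 : 0 < eps / 4 by rewrite divr_gt0.
have h1 := cvgr0_norm_lt _ rK _ e4.
have h2 := cvgr0_norm_lt _ hg _ e4.
have [N1 _ hN1] : \forall n \near \oo, `|r ^+ n * K| < eps / 4 by apply: h1.
have [N2 _ hN2] : \forall n \near \oo, `|g (y n)| < eps / 4 by apply: h2.
set n := maxn N1 N2.
have a1 := hN1 n (leq_maxl _ _); have a2 := hN2 n (leq_maxr _ _).
have a3 := lb n.
move: a1 a2; rewrite !ltr_norml => /andP [_ a1] /andP [_ a2]; lra.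
Qed.

End Seq.

Lemma dual_oc_of (R : realType) (E : completeNormedModType R) (L : BLattice R E)
  (Hw : forall g, is_dual g -> forall x : nat -> E,
    (exists M : R, forall n, `|x n| <= M) -> uaw_null L x ->
    (fun n => g (x n)) @ \oo --> (0 : R)) :
  dual_order_continuous_norm L.
Proof.
move=> I leI f hdir hdual hdec hpos hinf eps e0.
apply: contrapT => hn.
have hbig : forall j, exists i, leI j i /\ eps < dnorm (f i).
  move=> j; apply: contrapT => hj; apply: hn; exists j => i ji.
  by rewrite leNgt; apply/negP => hi; apply: hj; exists i; split.
have hst : forall j s (d : R), exists p : I * E, (0 < d -> ble L 0 s ->
  [/\ leI j p.1, f p.1 s < d, ble L 0 p.2, `|p.2| <= 1 & eps < f p.1 p.2]).
  move=> j s d; case: (pselect (0 < d /\ ble L 0 s)) => [[d0 s0]|hns]; last first.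
    by exists (j, 0) => d0 s0; exfalso; apply: hns.
  have [i1 hi1] := net_pointwise hdir hdual hdec hpos hinf s0 d0.
  have [k [jk i1k]] := hdir.2.2.2 j i1.
  have [i [ki hi]] := hbig k.
  have [x [x0 x1 xb]] := pf_big (hdual i) (hpos i) hi.
  exists (i, x) => _ _ /=; split => //.
  - exact: hdir.2.2.1 _ _ _ jk ki.
  - apply: le_lt_trans (hdec _ _ ki s s0) _; apply: le_lt_trans (hdec _ _ i1k s s0) _; exact: hi1.
pose step j s d := projT1 (cid (hst j s d)).
have hstep : forall j s d, 0 < d -> ble L 0 s ->
  [/\ leI j (step j s d).1, f (step j s d).1 s < d, ble L 0 (step j s d).2,
      `|(step j s d).2| <= 1 & eps < f (step j s d).1 (step j s d).2].
  by move=> j s d; exact: (projT2 (cid (hst j s d))).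
exact: (seq_false hdir hdual hdec hpos (projT1 (cid hdir.1)) e0 hstep Hw).
Qed.

Unset Implicit Arguments.

Theorem theorem4p3 (R : realType) (E F : completeNormedModType R)
    (LE : BLattice R E) (LF : BLattice R F) :
  (forall T : E -> F, is_operator T -> weak_DP T -> uaw_DP LE T) ->
  dual_order_continuous_norm LE \/ order_continuous_norm LF.
Proof.
move=> H; case: (pselect (exists y0 : F, y0 != 0)) => [[y0 hy]|hF].
  left; apply: dual_oc_of => g hg x xb xu.
  have hh := main_rank1 H hy hg xb xu. exact: hh.
right => I leI x hdir _ _ _ eps e0.
exists (projT1 (cid hdir.1)) => i _.
have -> : x i = 0.
  by apply: contrapT => /eqP hx; apply: hF; exists (x i).
by rewrite normr0 ltW.
Qed.
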